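(* Let $(L,\sqsubseteq)$ be a countably complete lattice, $F:L\to L$ monotone and countably continuous, and $a\in L^\omega$ with $a_n\sqsubseteq a_{n+1}$ for all $n$. Define $c_m=\inf_{n\ge m}\sup_{k\ge n}F^k(a_k)$. Then $F(c_m)\sqsubseteq c_m$ for all $m\in\omega$.
   Context: A countably complete lattice is a lattice in which every countable subset (including $\emptyset$) has a supremum and an infimum. $F$ is countably continuous if $F(\sup S)=\sup F(S)$ for every nonempty countable $S\subseteq L$. $F^k$ is the $k$-fold iterate. *)

(* Defs.v *)
From mathcomp Require Import all_boot all_order.
Set Implicit Arguments. Unset Strict Implicit. Unset Printing Implicit Defensive.
Import Order.TTheory.
Local Open Scope order_scope.

Section CountLattice.
Context {disp : Order.disp_t} {T : latticeType disp}.

Definition upper_bound (S : T -> Prop) (x : T) : Prop := forall y, S y -> y <= x.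
Definition lower_bound (S : T -> Prop) (x : T) : Prop := forall y, S y -> x <= y.

Definition is_sup (S : T -> Prop) (x : T) : Prop :=
  upper_bound S x /\ forall z, upper_bound S z -> x <= z.
Definition is_inf (S : T -> Prop) (x : T) : Prop :=
  lower_bound S x /\ forall z, lower_bound S z -> z <= x.

(* S is countable (possibly empty or finite): enumerated by some nat -> option T *)
Definition countable_set (S : T -> Prop) : Prop :=
  exists e : nat -> option T, forall x, S x <-> exists n, e n = Some x.

Definition countably_complete : Prop :=
  forall S : T -> Prop, countable_set S ->
    (exists x, is_sup S x) /\ (exists x, is_inf S x).

Definition image (F : T -> T) (S : T -> Prop) : T -> Prop :=
  fun y => exists x, S x /\ y = F x.

Definition countably_continuous (F : T -> T) : Prop :=
  forall S : T -> Prop, countable_set S -> (exists x, S x) ->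
    forall s, is_sup S s -> is_sup (image F S) (F s).

End CountLattice.

(* Main.v *)
Require Import Defs.
From mathcomp Require Import all_boot all_order.
Import Order.TTheory.
Local Open Scope order_scope.

Lemma iter_mono (disp : Order.disp_t) (T : latticeType disp) (F : T -> T)
  (Fmono : {homo F : x y / x <= y}) k x y : x <= y -> iter k F x <= iter k F y.
Proof. move=> h; elim: k => [|k IH] //=; exact: Fmono. Qed.

Theorem mainTheorem8 (disp : Order.disp_t) (T : latticeType disp)
  (hT : countably_complete (T:=T))
  (F : T -> T) (Fmono : {homo F : x y / x <= y})
  (Fcont : countably_continuous F)
  (a : nat -> T) (ha : forall n, a n <= a n.+1)
  (s : nat -> T)
  (hs : forall n, is_sup (fun x => exists k, (n <= k)%N /\ x = iter k F (a k)) (s n))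
  (m : nat) (c : T)
  (hc : is_inf (fun x => exists n, (m <= n)%N /\ x = s n) c) :
  F c <= c.
Proof.
have key : forall n, F (s n) <= s n.
  move=> n.
  have cS : countable_set (fun x => exists k, (n <= k)%N /\ x = iter k F (a k)).
    exists (fun j => Some (iter (n + j) F (a (n + j)))) => x; split.
      move=> [k [hk ->]]; exists (k - n)%N; by rewrite subnKC.
    move=> [j [<-]]; exists (n + j)%N; split => //; exact: leq_addr.
  have ne : exists x, (fun x => exists k, (n <= k)%N /\ x = iter k F (a k)) x.
    by exists (iter n F (a n)), n.
  have [_ H] := Fcont _ cS ne _ (hs n).
  apply: H => y [x [[k [hk ->]] ->]].
  change (iter k.+1 F (a k) <= s n).
  apply: (@le_trans _ _ (iter k.+1 F (a k.+1))); first by apply: iter_mono.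
  case: (hs n) => ub _; apply: ub; exists k.+1; split => //; exact: leqW.
case: hc => lb glb; apply: glb => y [n [hn ->]].
apply: (@le_trans _ _ (F (s n))); last exact: (key n). apply: Fmono; apply: lb; by exists n.
Qed.
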